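(* Let $\mathrm{E}$ be the equation $l\simeq r$ with $l\in M_X$ not a variable, and let $R\colon M_X\to M_X$ be weakly collapsing, a weak canonizer for $\mathrm{E}$, and non-overlapping for $\mathrm{E}$. Then for all words $w,w'\in M_X$ with $w\sim_{\mathrm{E}}w'$ one has $C_R(w)=C_R(w')$.
   Context: $M_X$ is the set of words of the free magma on alphabet $X$. For words $w,w'$, $w\sim_{\mathrm{E}}w'$ means the law $w\simeq w'$ is a consequence of $\mathrm{E}$ (every magma satisfying $\mathrm{E}$ satisfies $w\simeq w'$); equivalently, $w'$ is obtained from $w$ by finitely many replacements of a subword of the form $\varphi_\theta l$ by $\varphi_\theta r$ or vice versa. A substitution is a map $\theta\colon X\to M_X$, and $\varphi_\theta$ its extension to a magma endomorphism of $M_X$. A subword of $w$ is a subterm of $w$ (including $w$); a strict subword is one different from $w$. $R$ is weakly collapsing if $R(w)$ is a subword of $w$ for every $w$; $R$ is a weak canonizer for $\mathrm{E}$ if $R(\varphi_\theta l)=\varphi_\theta r$ for every substitution $\theta$; $R$ is non-overlapping for $\mathrm{E}$ if $R(\varphi_\theta w)=\varphi_\theta w$ for every substitution $\theta$ and every strict subword $w$ of $l$ that is not a variable. The map $C_R$ is defined by $C_R(x)=x$ for $x\in X$ and $C_R(w\diamond w')=R(C_R(w)\diamond C_R(w'))$. *)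

(* Defs.v *)
From Stdlib Require Import Relations.

Set Implicit Arguments.

Inductive word (X : Type) : Type :=
| Var : X -> word X
| Op : word X -> word X -> word X.

Arguments Var {X} _.
Arguments Op {X} _ _.

Fixpoint subst {X : Type} (theta : X -> word X) (w : word X) : word X :=
  match w with
  | Var x => theta x
  | Op w1 w2 => Op (subst theta w1) (subst theta w2)
  end.

Inductive subword {X : Type} : word X -> word X -> Prop :=
| sub_refl : forall w, subword w w
| sub_left : forall u w1 w2, subword u w1 -> subword u (Op w1 w2)
| sub_right : forall u w1 w2, subword u w2 -> subword u (Op w1 w2).

Definition is_var {X : Type} (w : word X) : Prop :=
  exists x, w = Var x.

Inductive step {X : Type} (l r : word X) : word X -> word X -> Prop :=
| step_root : forall theta, step l r (subst theta l) (subst theta r)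
| step_left : forall w1 w1' w2, step l r w1 w1' -> step l r (Op w1 w2) (Op w1' w2)
| step_right : forall w1 w2 w2', step l r w2 w2' -> step l r (Op w1 w2) (Op w1 w2').

Definition equiv_E {X : Type} (l r : word X) : word X -> word X -> Prop :=
  clos_refl_sym_trans (word X) (step l r).

Definition weakly_collapsing {X : Type} (R : word X -> word X) : Prop :=
  forall w, subword (R w) w.

Definition weak_canonizer {X : Type} (l r : word X) (R : word X -> word X) : Prop :=
  forall theta : X -> word X, R (subst theta l) = subst theta r.

Definition non_overlapping {X : Type} (l : word X) (R : word X -> word X) : Prop :=
  forall (theta : X -> word X) (w : word X),
    subword w l -> w <> l -> ~ is_var w -> R (subst theta w) = subst theta w.

Fixpoint C_R {X : Type} (R : word X -> word X) (w : word X) : word X :=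
  match w with
  | Var x => Var x
  | Op w1 w2 => R (Op (C_R R w1) (C_R R w2))
  end.

(* Main.v *)
Require Import Defs.
From Stdlib Require Import Relations Lia.

Fixpoint wsize {X : Type} (w : word X) : nat :=
  match w with Var _ => 1 | Op a b => S (wsize a + wsize b) end.

Lemma sub_size {X} (u w : word X) : subword u w -> wsize u <= wsize w.
Proof. induction 1; simpl; lia. Qed.

Lemma sub_eq {X} (u w : word X) : subword u w -> wsize u = wsize w -> u = w.
Proof. induction 1; intros E; auto; apply sub_size in H; simpl in E; lia. Qed.

Lemma sub_trans {X} (a b c : word X) : subword a b -> subword b c -> subword a c.
Proof. intros H1 H2; induction H2; auto. apply sub_left; auto. apply sub_right; auto. Qed.

Lemma subst_ext {X} (f g : X -> word X) w : (forall x, f x = g x) -> subst f w = subst g w.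
Proof. intros E; induction w; simpl; congruence. Qed.

Section S.
Variables (X : Type) (R : word X -> word X).
Hypothesis Hc : weakly_collapsing R.

Lemma C_size w : wsize (C_R R w) <= wsize w.
Proof. induction w; simpl; auto.
  pose proof (sub_size _ _ (Hc (Op (C_R R w1) (C_R R w2)))); simpl in *; lia. Qed.

Lemma fixed_sub u v : C_R R u = u -> subword v u -> C_R R v = v.
Proof.
  intros Hf H; induction H; auto.
  - apply IHsubword. simpl in Hf.
    pose proof (Hc (Op (C_R R w1) (C_R R w2))) as S. rewrite Hf in S.
    pose proof (sub_size _ _ S). pose proof (C_size w1). pose proof (C_size w2).
    simpl in *. apply sub_eq in S; [|simpl; lia]. injection S; auto.
  - apply IHsubword. simpl in Hf.
    pose proof (Hc (Op (C_R R w1) (C_R R w2))) as S. rewrite Hf in S.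
    pose proof (sub_size _ _ S). pose proof (C_size w1). pose proof (C_size w2).
    simpl in *. apply sub_eq in S; [|simpl; lia]. injection S; auto.
Qed.

Lemma idem w : C_R R (C_R R w) = C_R R w.
Proof.
  induction w; simpl; auto.
  pose proof (Hc (Op (C_R R w1) (C_R R w2))) as S.
  remember (R (Op (C_R R w1) (C_R R w2))) as u eqn:Eu.
  remember (Op (C_R R w1) (C_R R w2)) as v eqn:Ev.
  destruct S as [v0|u0 a b Hs|u0 a b Hs].
  - rewrite Eu at 2. rewrite Ev. simpl. rewrite IHw1, IHw2, <- Ev. auto.
  - injection Ev; intros; subst a b. eapply fixed_sub; [exact IHw1|exact Hs].
  - injection Ev; intros; subst a b. eapply fixed_sub; [exact IHw2|exact Hs].
Qed.

Lemma Csubst th w : C_R R (subst th w) = C_R R (subst (fun x => C_R R (th x)) w).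
Proof. induction w; simpl. - symmetry; apply idem. - rewrite IHw1, IHw2; auto. Qed.

Variables (l r : word X).
Hypotheses (Hl : ~ is_var l) (Hw : weak_canonizer l r R) (Hn : non_overlapping l R).

Lemma strict th w : subword w l -> wsize w < wsize l ->
  C_R R (subst th w) = subst (fun x => C_R R (th x)) w.
Proof.
  induction w; intros Hs Hz; simpl; auto.
  assert (subword w1 l) by (eapply sub_trans; [apply sub_left, sub_refl|exact Hs]).
  assert (subword w2 l) by (eapply sub_trans; [apply sub_right, sub_refl|exact Hs]).
  simpl in Hz.
  rewrite IHw1, IHw2 by (auto; lia).
  apply (Hn _ (Op w1 w2)); auto.
  - intro E; subst; simpl in Hz; lia.
  - intros [x E]; discriminate.
Qed.

Lemma root th : C_R R (subst th l) = subst (fun x => C_R R (th x)) r.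
Proof.
  assert (Hs : exists l1 l2, l = Op l1 l2).
  { destruct l as [x|l1 l2]; [exfalso; apply Hl; eexists; eauto|eauto]. }
  destruct Hs as [l1 [l2 El]].
  rewrite <- Hw. rewrite El. simpl.
  rewrite !strict; rewrite ?El; simpl; try lia.
  - auto.
  - apply sub_right, sub_refl.
  - apply sub_left, sub_refl.
Qed.

Lemma root2 th : C_R R (subst th l) = C_R R (subst th r).
Proof.
  rewrite root, (Csubst th r).
  set (th' := fun x => C_R R (th x)).
  assert (E := root th').
  rewrite (subst_ext (fun x => C_R R (th' x)) th') in E by (intro; unfold th'; apply idem).
  rewrite <- E, idem; auto.
Qed.

Lemma step_C w w' : step l r w w' -> C_R R w = C_R R w'.
Proof. induction 1; simpl; try congruence. apply root2. Qed.
End S.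

Theorem mainTheorem8 (X : Type) (l r : word X) (R : word X -> word X) :
  ~ is_var l ->
  weakly_collapsing R ->
  weak_canonizer l r R ->
  non_overlapping l R ->
  forall w w' : word X, equiv_E l r w w' -> C_R R w = C_R R w'.
Proof.
  intros Hl Hc Hw Hn w w' H; induction H; try congruence.
  eapply step_C; eauto.
Qed.
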